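(* If $C=(C_{i,j})$ is an $m\times n$ evolutionary stable (ES) configuration with $m,n>2$, then $C_{m-1,2}=C_{m-1,n-1}=0$.
   Context: An $m\times n$ configuration is a $0$-$1$ matrix $C=(C_{i,j})$, $1\le i\le m$, $1\le j\le n$; $C_{i,j}=1$ means lot $(i,j)$ is occupied by a house. Row $1$ is the northernmost, row $m$ the southernmost; column $1$ westernmost, column $n$ easternmost. A house at $(i,j)$ is blocked from sunlight if the three lots $(i,j-1)$, $(i,j+1)$, $(i+1,j)$ all lie inside the grid and are all occupied (lots outside the grid never obstruct sunlight). $C$ is permissible if no house is blocked, and maximal if it is permissible and setting any single empty lot to $1$ yields a non-permissible configuration. A maximal configuration is resistant to predators if, for every empty lot, putting a house on it results in that new house being blocked; it is resistant to altruists if, for every empty lot, putting a house on it results in some other (already existing) house being blocked. An ES configuration is a maximal configuration resistant to both predators and altruists. *)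

(* Defs.v *)
From mathcomp Require Import all_boot.
Set Implicit Arguments. Unset Strict Implicit. Unset Printing Implicit Defensive.

(* An m x n configuration is a 0-1 matrix, represented as a function
   C : nat -> nat -> bool with 1-based indices; only entries with
   1 <= i <= m, 1 <= j <= n are ever consulted (true = house). *)
Definition config := nat -> nat -> bool.

Definition in_grid (m n i j : nat) : bool := (1 <= i <= m) && (1 <= j <= n).

Definition blocked (m n : nat) (C : config) (i j : nat) : bool :=
  [&& C i j, in_grid m n i (j - 1) && (1 < j), in_grid m n i (j + 1),
      in_grid m n (i + 1) j, C i (j - 1), C i (j + 1) & C (i + 1) j].

Definition permissible (m n : nat) (C : config) : Prop :=
  forall i j, in_grid m n i j -> ~~ blocked m n C i j.

Definition add_house (C : config) (a b : nat) : config :=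
  fun i j => if (i == a) && (j == b) then true else C i j.

Definition maximal (m n : nat) (C : config) : Prop :=
  permissible m n C /\
  forall a b, in_grid m n a b -> C a b = false ->
    ~ permissible m n (add_house C a b).

Definition resistant_to_predators (m n : nat) (C : config) : Prop :=
  maximal m n C /\
  forall a b, in_grid m n a b -> C a b = false ->
    blocked m n (add_house C a b) a b.

Definition resistant_to_altruists (m n : nat) (C : config) : Prop :=
  maximal m n C /\
  forall a b, in_grid m n a b -> C a b = false ->
    exists i j, [/\ in_grid m n i j, (i, j) <> (a, b), C i j &
                    blocked m n (add_house C a b) i j].

Definition ES (m n : nat) (C : config) : Prop :=
  maximal m n C /\ resistant_to_predators m n C /\ resistant_to_altruists m n C.

(* Main.v *)
Require Import Defs.
From mathcomp Require Import all_boot zify.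
Set Implicit Arguments. Unset Strict Implicit. Unset Printing Implicit Defensive.

Definition tabJ : seq (seq nat) := [:: [:: 1; 1; 1; 2];
  [:: 1; 1; 1; 1];
  [:: 1; 3; 4; 5];
  [:: 1; 1; 6; 7];
  [:: 1; 8; 1; 9];
  [:: 1; 10; 1; 1];
  [:: 1; 1; 1; 11];
  [:: 1; 1; 12; 13];
  [:: 1; 1; 1; 14];
  [:: 1; 15; 1; 1];
  [:: 1; 1; 16; 17];
  [:: 1; 18; 1; 1];
  [:: 1; 19; 1; 9];
  [:: 1; 20; 1; 1];
  [:: 1; 1; 4; 21];
  [:: 1; 1; 4; 22];
  [:: 1; 23; 1; 24];
  [:: 1; 25; 1; 13];
  [:: 1; 1; 6; 26];
  [:: 1; 1; 6; 27];
  [:: 1; 1; 1; 17];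
  [:: 1; 1; 1; 1];
  [:: 1; 1; 12; 1];
  [:: 1; 1; 1; 28];
  [:: 1; 29; 1; 1];
  [:: 1; 1; 1; 30];
  [:: 1; 1; 31; 1];
  [:: 1; 1; 12; 21];
  [:: 1; 1; 32; 21];
  [:: 1; 1; 16; 33];
  [:: 1; 1; 1; 13];
  [:: 1; 18; 1; 34];
  [:: 1; 23; 1; 35];
  [:: 1; 1; 4; 1];
  [:: 1; 36; 1; 1];
  [:: 1; 37; 1; 1];
  [:: 1; 1; 38; 39];
  [:: 1; 1; 32; 40];
  [:: 1; 41; 1; 34];
  [:: 1; 1; 42; 1];
  [:: 1; 1; 32; 1];
  [:: 1; 1; 1; 43];
  [:: 1; 44; 1; 34];
  [:: 1; 1; 38; 1];
  [:: 1; 1; 6; 45];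
  [:: 1; 1; 42; 21]].
Definition accJ : seq bool := [:: false; false; false; false; false; false; false; true; false; true; false; false; false; true; false; false; false; true; false; false; false; true; true; false; true; false; true; true; false; false; false; false; false; true; true; true; false; false; false; true; true; false; false; false; false; true].
Definition s0J : nat := 0.

Definition letter := seq bool.
Definition bt (l : letter) (r : nat) : bool := nth false l r.
Definition code (a : bool * bool) : nat := (2 * a.1 + a.2)%N.
Definition dJ (s : nat) (a : bool * bool) : nat := nth 0 (nth [::] tabJ s) (code a).
Definition aJ (s : nat) : bool := nth false accJ s.
Fixpoint drun (g : nat -> bool * bool) (k : nat) : nat :=
  match k with 0 => s0J | k'.+1 => dJ (drun g k') (g k) end.

Record st := St { sp : nat; sq : nat; b1 : letter; b2 : letter; b3 : letter; b4 : letter; stt : nat }.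

Inductive trie := TL | TN of bool & trie & trie.
Fixpoint tmem (t : trie) (k : seq bool) : bool :=
  match t, k with
  | TL, _ => false
  | TN b _ _, [::] => b
  | TN _ l r, x :: k' => tmem (if x then r else l) k'
  end.
Fixpoint tins (t : trie) (k : seq bool) : trie :=
  match k with
  | [::] => match t with TL => TN true TL TL | TN _ l r => TN true l r end
  | x :: k' => match t with
               | TL => if x then TN false TL (tins TL k') else TN false (tins TL k') TL
               | TN b l r => if x then TN b l (tins r k') else TN b (tins l k') r
               end
  end.

Definition unary (x : nat) : seq bool := rcons (nseq x true) false.
Definition encl (l : letter) : seq bool := rcons (flatten [seq [:: true; b] | b <- l]) false.
Definition enc (s : st) : seq bool :=
  unary (sp s) ++ unary (sq s) ++ encl (b1 s) ++ encl (b2 s) ++ encl (b3 s) ++ encl (b4 s) ++ unary (stt s).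

Fixpoint alph (R : nat) : seq letter :=
  match R with 0 => [:: [::]] | R'.+1 => [seq false :: l | l <- alph R'] ++ [seq true :: l | l <- alph R'] end.

Section Machine.
Variable R : nat.
Variable chk : bool -> bool -> letter -> letter -> letter -> letter -> letter -> bool.
Variables pr1 pr2 : letter -> bool * bool.
Variable extra : nat -> letter -> bool.
Variable endx : letter -> bool.
Variable goal : nat -> nat -> bool.

Definition start := St s0J s0J [::] [::] [::] [::] 0.

Definition mstep (s : st) (c : letter) : option st :=
  let ok := if stt s == 0 then all id c
            else if 3 <= stt s then chk (4 <= stt s) true (b1 s) (b2 s) (b3 s) (b4 s) c
            else true in
  if ok && extra (stt s) c then
    Some (St (dJ (sp s) (pr1 c)) (dJ (sq s) (pr2 c)) (b2 s) (b3 s) (b4 s) c (minn (stt s).+1 4))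
  else None.

Definition mfin (s : st) : bool :=
  (3 <= stt s) ==> all id (b4 s) ==> chk (4 <= stt s) false (b1 s) (b2 s) (b3 s) (b4 s) [::]
  ==> endx (b3 s) ==> goal (sp s) (sq s).

Definition succs (s : st) : seq st := pmap (mstep s) (alph R).

Fixpoint bfs (fuel : nat) (todo : seq st) (seen : trie) (acc : seq st) : seq st :=
  match fuel with
  | 0 => acc
  | fuel'.+1 =>
    match todo with
    | [::] => acc
    | s :: todo' =>
      let '(seen', nw) := foldl (fun p s' => let '(sn, nw) := p in
                              if tmem sn (enc s') then (sn, nw) else (tins sn (enc s'), s' :: nw))
                              (seen, [::]) (succs s) in
      bfs fuel' (nw ++ todo') seen' (nw ++ acc)
    end
  end.

Definition reachl := bfs 60000 [:: start] (tins TL (enc start)) [:: start].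
Definition tbuild (l : seq st) : trie := foldl (fun t s => tins t (enc s)) TL l.

Definition check_cert (l : seq st) : bool :=
  let T := tbuild l in
  tmem T (enc start) &&
  all (fun s => all (fun s' => tmem T (enc s')) (succs s) && mfin s) l.

End Machine.

Definition ppb (c l r b : bool) := ~~ (c && l && r && b) && (c || l && r && b).
Definition altb (a1 a2 c l2 bl r2 br a3 : bool) := [|| c, a1 && l2 && bl, a2 && r2 && br | a3].

Definition chk_step (a1 a2 : bool) (L2 L1 C R1 R2 : letter) : bool :=
  [&& ppb (bt C 1) (bt L1 1) (bt R1 1) (bt C 2),
      altb a1 a2 (bt C 1) (bt L2 1) (bt L1 2) (bt R2 1) (bt R1 2) [&& bt C 0, bt L1 0 & bt R1 0],
      ppb (bt C 2) (bt L1 2) (bt R1 2) (bt C 3),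
      altb a1 a2 (bt C 2) (bt L2 2) (bt L1 3) (bt R2 2) (bt R1 3) [&& bt C 1, bt L1 1 & bt R1 1] &
      bt C 3 || bt L1 3 && bt R1 3].
Definition chk_base (a1 a2 : bool) (L2 L1 C R1 R2 : letter) : bool :=
  [&& ppb (bt C 0) (bt L1 0) (bt R1 0) (bt C 1),
      altb a1 a2 (bt C 0) (bt L2 0) (bt L1 1) (bt R2 0) (bt R1 1) false,
      ppb (bt C 1) (bt L1 1) (bt R1 1) (bt C 2),
      altb a1 a2 (bt C 1) (bt L2 1) (bt L1 2) (bt R2 1) (bt R1 2) [&& bt C 0, bt L1 0 & bt R1 0] &
      bt C 2 || bt L1 2 && bt R1 2].
Definition chk_fin (a1 a2 : bool) (L2 L1 C R1 R2 : letter) : bool :=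
  ppb (bt C 1) (bt L1 1) (bt R1 1) true &&
  altb a1 a2 (bt C 1) (bt L2 1) true (bt R2 1) true [&& bt C 0, bt L1 0 & bt R1 0].

Definition p01 (c : letter) := (bt c 0, bt c 1).
Definition p12 (c : letter) := (bt c 1, bt c 2).
Definition p00 (c : letter) := (false, false).

Definition goal_step (p q : nat) := ~~ aJ p || aJ q.
Definition goal_base (p q : nat) := aJ p.
Definition goal_fin (p q : nat) := ~~ aJ p.
Definition ex_true (t : nat) (c : letter) := true.
Definition ex_L (t : nat) (c : letter) := (t != 1) || bt c 1.
Definition en_true (c : letter) := true.
Definition en_R (c : letter) := bt c 1.


Lemma tmem_tins t k k' : tmem (tins t k) k' = (k' == k) || tmem t k'.
Proof.
elim: k t k' => [|x k IH] t k'.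
  by case: t => [|b l r]; case: k' => [|y k'] //=; case: y.
case: t => [|b l r]; case: k' => [|y k'] /=; try by case: x.
- rewrite eqseq_cons orbF; case: x; case: y => //=; rewrite IH /= ?orbF //.
- rewrite eqseq_cons; case: x; case: y => //=; rewrite IH //.
Qed.

Lemma tmem_fold l t k :
  tmem (foldl (fun t s => tins t (enc s)) t l) k = has (fun s => k == enc s) l || tmem t k.
Proof.
elim: l t => [|s l IH] t //=.
by rewrite IH tmem_tins orbA (orbC _ (k == enc s)).
Qed.

Lemma unary_inj x y r r' : unary x ++ r = unary y ++ r' -> x = y /\ r = r'.
Proof.
elim: x y => [|x IH] [|y] //=; first by case.
by case=> /IH [-> ->].
Qed.

Lemma encl_inj l l' r r' : encl l ++ r = encl l' ++ r' -> l = l' /\ r = r'.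
Proof.
elim: l l' => [|b l IH] [|b' l'] //=; first by case.
by case=> -> /IH [-> ->].
Qed.

Lemma enc_inj s s' : enc s = enc s' -> s = s'.
Proof.
case: s => p q x1 x2 x3 x4 t; case: s' => p' q' y1 y2 y3 y4 t'.
rewrite /enc /= => E.
case/unary_inj: E => -> /unary_inj [-> /encl_inj [-> /encl_inj [-> /encl_inj [-> /encl_inj [-> E]]]]].
by move: E; rewrite -[unary t]cats0 -[unary t']cats0 => /unary_inj [-> _].
Qed.

Lemma mem_alph R l : size l = R -> l \in alph R.
Proof.
elim: R l => [|R IH] [|b l] //= [E].
rewrite mem_cat; case: b.
  by rewrite (map_f (fun x => true :: x) (IH _ E)) orbT.
by rewrite (map_f (fun x => false :: x) (IH _ E)).
Qed.

Lemma all_has_ex (T : Type) (P Q : pred T) (l : seq T) :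
  all P l -> has Q l -> exists s, P s /\ Q s.
Proof.
elim: l => [|x l IH] //= /andP [Px Pl] /orP [Qx|Ql]; first by exists x.
exact: IH.
Qed.

Lemma all_pmap (A : eqType) (B : Type) (g : A -> option B) (P : pred B) (l : seq A) x y :
  all P (pmap g l) -> x \in l -> g x = Some y -> P y.
Proof.
elim: l => [|a l IH] //=.
case E: (g a) => [b|] /=.
  case/andP => Pb Pl; rewrite in_cons => /orP [/eqP ->|Hx]; first by rewrite E => -[<-].
  exact: IH.
move=> Pl; rewrite in_cons => /orP [/eqP ->|Hx]; first by rewrite E.
exact: IH.
Qed.

Section Sound.
Variable R : nat.
Variable chk : bool -> bool -> letter -> letter -> letter -> letter -> letter -> bool.
Variables pr1 pr2 : letter -> bool * bool.
Variable extra : nat -> letter -> bool.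
Variable endx : letter -> bool.
Variable goal : nat -> nat -> bool.
Hypothesis chk_i1 : forall a2 l2 l2' l1 c r1 r2,
  chk false a2 l2 l1 c r1 r2 = chk false a2 l2' l1 c r1 r2.
Hypothesis chk_i2 : forall a1 l2 l1 c r1 r2 r2',
  chk a1 false l2 l1 c r1 r2 = chk a1 false l2 l1 c r1 r2'.

Variable f : nat -> letter.
Variable n : nat.
Hypothesis n3 : 2 < n.
Hypothesis fsz : forall k, size (f k) = R.
Hypothesis f1 : all id (f 1).
Hypothesis fn : all id (f n).
Hypothesis fex : forall k, 1 <= k <= n -> extra (minn k.-1 4) (f k).
Hypothesis fmid : forall k, 2 <= k -> k.+2 <= n ->
  chk (3 <= k) true (f k.-2) (f k.-1) (f k) (f k.+1) (f k.+2).
Hypothesis flast : chk (4 <= n) false (f (n - 3)) (f (n - 2)) (f n.-1) (f n) (f n.+1).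
Hypothesis fend : endx (f n.-1).

Definition bf k d := if d < k then f (k - d) else [::].
Definition exs k := St (drun (fun j => pr1 (f j)) k) (drun (fun j => pr2 (f j)) k)
  (bf k 3) (bf k 2) (bf k 1) (bf k 0) (minn k 4).

Lemma bfS k d : bf k.+1 d.+1 = bf k d.
Proof. by rewrite /bf ltnS subSS. Qed.

Lemma exs_step k : k < n -> mstep chk pr1 pr2 extra (exs k) (f k.+1) = Some (exs k.+1).
Proof.
move=> kn.
have Hex : extra (minn k 4) (f k.+1) by apply: (fex (k := k.+1)); lia.
rewrite /mstep /= Hex andbT.
have -> : (if minn k 4 == 0 then all id (f k.+1)
   else if 3 <= minn k 4 then chk (4 <= minn k 4) true (bf k 3) (bf k 2) (bf k 1) (bf k 0) (f k.+1)
   else true) = true.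
  case: (ltnP k 3) => k3.
    case: k k3 kn Hex => [|[|[|k]]] //= _ _ _.
  have Ek : k = (k.-1).+1 by lia.
  have H := fmid (k := k.-1); move: H.
  have -> : 2 <= k.-1 by lia.
  have -> : (k.-1).+2 <= n by lia.
  move=> /(_ isT isT).
  have -> : (minn k 4 == 0) = false by lia.
  have -> : (3 <= minn k 4) = true by lia.
  have -> : (4 <= minn k 4) = (3 <= k.-1) by lia.
  rewrite /bf.
  have -> : (2 < k) = true by lia.
  have -> : (1 < k) = true by lia.
  have -> : (0 < k) = true by lia.
  have -> : k - 2 = (k.-1).-1 by lia.
  have -> : k - 1 = k.-1 by lia.
  have -> : k - 0 = (k.-1).+1 by lia.
  have -> : k.+1 = (k.-1).+2 by lia.
  case: (ltnP 3 k) => k4.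
    by have -> : k - 3 = (k.-1).-2 by lia.
  have -> : (3 <= k.-1) = false by lia.
  by move=> H; rewrite (chk_i1 _ _ (f (k.-1).-2)).
congr Some; rewrite /exs /=.
have -> : minn (minn k 4).+1 4 = minn k.+1 4 by lia.
by rewrite !bfS /bf /= subn0.
Qed.

Variable l : seq st.
Hypothesis cert : check_cert R chk pr1 pr2 extra endx goal l = true.

Lemma inv_exs k : k <= n -> tmem (tbuild l) (enc (exs k)).
Proof.
move: cert; rewrite /check_cert => /andP [Hs Hall].
elim: k => [|k IH] kn; first by [].
have /IH Hk : k <= n by lia.
move: Hk; rewrite /tbuild tmem_fold orbF => Hk.
have [s [/andP [Hsucc _] /eqP Es]] := all_has_ex Hall Hk.
have E : s = exs k by apply: enc_inj.
move: Hsucc; rewrite E /succs -/(tbuild l) => Hsucc.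
apply: (all_pmap (l := alph R) Hsucc).
  exact: mem_alph.
exact: exs_step.
Qed.
Theorem machine_sound : goal (drun (fun j => pr1 (f j)) n) (drun (fun j => pr2 (f j)) n).
Proof.
have Hn := inv_exs (leqnn n).
move: cert; rewrite /check_cert => /andP [_ Hall].
move: Hn; rewrite /tbuild tmem_fold orbF => Hn.
have [s [/andP [_ Hfin] /eqP Es]] := all_has_ex Hall Hn.
have E : s = exs n by apply: enc_inj.
move: Hfin; rewrite E /mfin /exs /=.
have -> : (3 <= minn n 4) = true by lia.
rewrite /bf.
have -> : (0 < n) = true by lia.
have -> : (1 < n) = true by lia.
have -> : (2 < n) = true by lia.
have -> : (4 <= minn n 4) = (4 <= n) by lia.
have -> : n - 1 = n.-1 by lia.
rewrite subn0 fn fend /= (chk_i2 _ _ _ _ _ [::] (f n.+1)).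
have fl := flast.
case: (ltnP 3 n) => n4.
  by rewrite n4 in fl; rewrite fl.
have n4' : (3 < n) = false by lia.
rewrite (chk_i1 _ _ (f (n - 3))).
by rewrite n4' in fl; rewrite fl.
Qed.
End Sound.

Definition RS := reachl 4 chk_step p01 p12 ex_true.
Lemma certS : check_cert 4 chk_step p01 p12 ex_true en_true goal_step RS = true.
Proof. vm_compute. reflexivity. Qed.
Definition RB := reachl 3 chk_base p01 p00 ex_true.
Lemma certB : check_cert 3 chk_base p01 p00 ex_true en_true goal_base RB = true.
Proof. vm_compute. reflexivity. Qed.
Definition RL := reachl 2 chk_fin p01 p00 ex_L.
Lemma certL : check_cert 2 chk_fin p01 p00 ex_L en_true goal_fin RL = true.
Proof. vm_compute. reflexivity. Qed.
Definition RR := reachl 2 chk_fin p01 p00 ex_true.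
Lemma certR : check_cert 2 chk_fin p01 p00 ex_true en_R goal_fin RR = true.
Proof. vm_compute. reflexivity. Qed.


Lemma blockedE m n (D : config) i j : blocked m n D i j =
  [&& D i j, D i j.-1, D i j.+1, D i.+1 j, 0 < i, i.+1 <= m, 1 < j & j.+1 <= n].
Proof.
rewrite /blocked /in_grid subn1 !addn1.
case: (D i j) (D i j.-1) (D i j.+1) (D i.+1 j) => [] [] [] [] /=; lia.
Qed.

Section ES.
Variables (m n : nat) (C : config).
Hypotheses (Hm : 2 < m) (Hn : 2 < n) (HES : ES m n C).

Lemma F_bnd r k : 0 < r <= m -> 0 < k <= n -> (k == 1) || (k == n) || (r == m) -> C r k.
Proof.
move=> Hr Hk Hb; case E: (C r k) => //.
case: HES => _ [[_ Hpred] _].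
have : in_grid m n r k by rewrite /in_grid; lia.
move/Hpred/(_ E); rewrite blockedE; lia.
Qed.

Lemma F_pp r k : 0 < r < m -> 1 < k < n -> ppb (C r k) (C r k.-1) (C r k.+1) (C r.+1 k).
Proof.
move=> Hr Hk.
case: HES => [[Hperm _] [[_ Hpred] _]].
have G : in_grid m n r k by rewrite /in_grid; lia.
apply/andP; split.
  move: (Hperm r k G); rewrite blockedE.
  have -> : (0 < r) = true by lia.
  have -> : (r.+1 <= m) = true by lia.
  have -> : (1 < k) = true by lia.
  have -> : (k.+1 <= n) = true by lia.
  by rewrite !andbT !andbA.
case E: (C r k) => //=.
move: (Hpred r k G E); rewrite blockedE /add_house.
have -> : (k.-1 == k) = false by lia.
have -> : (k.+1 == k) = false by lia.
have -> : (r.+1 == r) = false by lia.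
rewrite !andbF /=.
by case/andP => _ /andP [-> /andP [-> /andP [-> _]]].
Qed.

Lemma F_alt r k : 0 < r < m -> 1 < k < n ->
  altb (3 <= k) (k.+2 <= n) (C r k) (C r k.-2) (C r.+1 k.-1) (C r k.+2) (C r.+1 k.+1)
     ((1 < r) && [&& C r.-1 k, C r.-1 k.-1 & C r.-1 k.+1]).
Proof.
move=> Hr Hk.
case: HES => [[Hperm _] [_ [_ Halt]]].
have G : in_grid m n r k by rewrite /in_grid; lia.
rewrite /altb; case E: (C r k) => //=.
have [i [j [Gij Nij Cij B]]] := Halt r k G E.
move: B; rewrite blockedE /add_house.
have Hb0 : ~~ blocked m n C i j := Hperm i j Gij.
move: Hb0; rewrite blockedE.
case: (eqVneq i r) => [Ei|Ni] /=; last first.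
  case: (eqVneq i.+1 r) => [Ei1|Ni1] /=; last first.
    by move=> /negbTE ->.
  case: (eqVneq j k) => [Ej|Nj] /=; last by move=> /negbTE ->.
  subst r j => _ /and4P [-> -> -> /and4P [i0 _ _ _]] /=.
  by rewrite ltnS i0 !orbT.
subst i.
have -> : (j == k) = false by apply/negbTE; apply/eqP => Ejk; apply: Nij; rewrite Ejk.
have -> : (r.+1 == r) = false by lia.
rewrite /=.
case: (eqVneq j.-1 k) => [Ej|Nj] /=.
  have Ej' : j = k.+1 by lia.
  subst j; rewrite /=.
  have -> : (k.+2 == k) = false by lia.
  move=> _ /and4P [_ -> -> /and4P [_ _ _ ->]].
  by rewrite !andbT !orbT.
case: (eqVneq j.+1 k) => [Ej|Nj2] /=; last by move=> /negbTE ->.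
have Ej' : j = k.-1 by lia.
subst j.
move=> _ /and4P [_ -> -> /and4P [_ _ Hk1 _]].
have -> : 2 < k by lia.
by [].
Qed.

End ES.


Theorem machine_sound' (R : nat) (chk : bool -> bool -> letter -> letter -> letter -> letter -> letter -> bool)
  (pr1 pr2 : letter -> bool * bool) (extra : nat -> letter -> bool) (endx : letter -> bool) (goal : nat -> nat -> bool)
  (chk_i1 : forall a2 l2 l2' l1 c r1 r2, chk false a2 l2 l1 c r1 r2 = chk false a2 l2' l1 c r1 r2)
  (chk_i2 : forall a1 l2 l1 c r1 r2 r2', chk a1 false l2 l1 c r1 r2 = chk a1 false l2 l1 c r1 r2')
  (f : nat -> letter) n (n3 : 2 < n) (fsz : forall k, size (f k) = R)
  (f1 : all id (f 1)) (fn : all id (f n))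
  (fex : forall k, 1 <= k <= n -> extra (minn k.-1 4) (f k))
  (fmid : forall k, 1 < k < n -> chk (3 <= k) (k.+2 <= n) (f k.-2) (f k.-1) (f k) (f k.+1) (f k.+2))
  (fend : endx (f n.-1)) (l : seq st)
  (cert : check_cert R chk pr1 pr2 extra endx goal l = true) :
  goal (drun (fun j => pr1 (f j)) n) (drun (fun j => pr2 (f j)) n).
Proof.
apply: (machine_sound chk_i1 chk_i2 n3 fsz f1 fn fex _ _ fend cert).
  move=> k k2 kn; have := fmid k; rewrite kn.
  by apply; lia.
have := fmid n.-1.
have -> : (3 <= n.-1) = (4 <= n) by lia.
have -> : ((n.-1).+2 <= n) = false by lia.
have -> : (n.-1).-2 = n - 3 by lia.
have -> : (n.-1).-1 = n - 2 by lia.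
have -> : (n.-1).+1 = n by lia.
by apply; lia.
Qed.

Section Main.
Variables (m n : nat) (C : config).
Hypotheses (Hm : 2 < m) (Hn : 2 < n) (HES : ES m n C).

Lemma F_hv r k : 0 < r <= m -> 1 < k < n -> C r k || C r k.-1 && C r k.+1.
Proof.
move=> Hr Hk; case: (ltnP r m) => rm.
  have /andP [_] := F_pp Hm Hn HES (r:=r) (k:=k) (ltac:(lia)) Hk.
  by case: (C r k) => //= /andP [/andP [-> ->]].
by rewrite (F_bnd Hm Hn HES (r:=r) (k:=k)) //; lia.
Qed.

Definition J i := aJ (drun (fun k => (C i k, C i.+1 k)) n).

Definition fS a k := [:: C a k; C a.+1 k; C a.+2 k; C a.+3 k].
Definition fB k := [:: C 1 k; C 2 k; C 3 k].

Lemma bndcol r : 0 < r <= m -> C r 1 /\ C r n.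
Proof. by move=> Hr; split; apply: (F_bnd Hm Hn HES); lia. Qed.

Lemma J_base : J 1.
Proof.
have := @machine_sound' 3 chk_base p01 p00 ex_true en_true goal_base
  (fun _ _ _ _ _ _ _ => erefl) (fun _ _ _ _ _ _ _ => erefl) fB n Hn (fun _ => erefl).
apply => //.
- rewrite /fB /=; have [-> _] := bndcol (r:=1) ltac:(lia);
  have [-> _] := bndcol (r:=2) ltac:(lia); by have [-> _] := bndcol (r:=3) ltac:(lia).
- rewrite /fB /=; have [_ ->] := bndcol (r:=1) ltac:(lia);
  have [_ ->] := bndcol (r:=2) ltac:(lia); by have [_ ->] := bndcol (r:=3) ltac:(lia).
- move=> k Hk; rewrite /chk_base /fB /bt /=.
  rewrite (F_pp Hm Hn HES (r:=1)) ?(F_pp Hm Hn HES (r:=2)) //; try lia.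
  have := F_alt Hm Hn HES (r:=1) (k:=k) ltac:(lia) Hk; rewrite /= => ->.
  have := F_alt Hm Hn HES (r:=2) (k:=k) ltac:(lia) Hk; rewrite /= => ->.
  by rewrite (F_hv (r:=3)) //; lia.
- exact: certB.
Qed.

Lemma J_step a : 0 < a -> a.+3 <= m -> J a -> J a.+1.
Proof.
move=> a0 am Ja.
have := @machine_sound' 4 chk_step p01 p12 ex_true en_true goal_step
  (fun _ _ _ _ _ _ _ => erefl) (fun _ _ _ _ _ _ _ => erefl) (fS a) n Hn (fun _ => erefl).
have Hg : goal_step (drun (fun j => p01 (fS a j)) n) (drun (fun j => p12 (fS a j)) n) -> J a.+1.
  by rewrite /goal_step -/(J a) -/(J a.+1) Ja.
move=> H; apply: Hg; apply: H => //.
- rewrite /fS /=; have [-> _] := bndcol (r:=a) ltac:(lia);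
  have [-> _] := bndcol (r:=a.+1) ltac:(lia); have [-> _] := bndcol (r:=a.+2) ltac:(lia);
  by have [-> _] := bndcol (r:=a.+3) ltac:(lia).
- rewrite /fS /=; have [_ ->] := bndcol (r:=a) ltac:(lia);
  have [_ ->] := bndcol (r:=a.+1) ltac:(lia); have [_ ->] := bndcol (r:=a.+2) ltac:(lia);
  by have [_ ->] := bndcol (r:=a.+3) ltac:(lia).
- move=> k Hk; rewrite /chk_step /fS /bt /=.
  rewrite (F_pp Hm Hn HES (r:=a.+1)) ?(F_pp Hm Hn HES (r:=a.+2)) //; try lia.
  have := F_alt Hm Hn HES (r:=a.+1) (k:=k) ltac:(lia) Hk; rewrite /=; have -> : 1 < a.+1 by lia.
  move=> ->.
  have := F_alt Hm Hn HES (r:=a.+2) (k:=k) ltac:(lia) Hk; rewrite /= => ->.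
  by rewrite (F_hv (r:=a.+3)) //; lia.
- exact: certS.
Qed.

Lemma J_all i : 0 < i <= m.-2 -> J i.
Proof.
elim: i => [|i IH] // Hi.
case: i IH Hi => [|i] IH Hi; first exact: J_base.
apply: J_step => //; first lia.
by apply: IH; lia.
Qed.

Definition fF k := [:: C m.-2 k; C (m.-2).+1 k].

Lemma chkF_real k : 1 < k < n ->
  chk_fin (3 <= k) (k.+2 <= n) (fF k.-2) (fF k.-1) (fF k) (fF k.+1) (fF k.+2).
Proof.
move=> Hk; rewrite /chk_fin /fF /bt /=.
have Em : (m.-2).+2 = m by lia.
have := F_pp Hm Hn HES (r:=(m.-2).+1) (k:=k) ltac:(lia) Hk; rewrite Em.
rewrite (F_bnd Hm Hn HES (r:=m) (k:=k)); try lia; move=> ->.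
have := F_alt Hm Hn HES (r:=(m.-2).+1) (k:=k) ltac:(lia) Hk; rewrite Em.
rewrite (F_bnd Hm Hn HES (r:=m) (k:=k.-1)); try lia.
rewrite (F_bnd Hm Hn HES (r:=m) (k:=k.+1)); try lia.
have -> : 1 < (m.-2).+1 by lia.
by rewrite /=.
Qed.

Lemma fF_bnd : all id (fF 1) && all id (fF n).
Proof.
rewrite /fF /=; have [-> ->] := bndcol (r:=m.-2) ltac:(lia).
by have [-> ->] := bndcol (r:=(m.-2).+1) ltac:(lia).
Qed.

Lemma finL : C m.-1 2 = false.
Proof.
apply/negbTE/negP => H2.
have := @machine_sound' 2 chk_fin p01 p00 ex_L en_true goal_fin
  (fun _ _ _ _ _ _ _ => erefl) (fun _ _ _ _ _ _ _ => erefl) fF n Hn (fun _ => erefl).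
have /andP [B1 B2] := fF_bnd.
move=> /(_ B1 B2) H.
have : goal_fin (drun (fun j => p01 (fF j)) n) (drun (fun j => p00 (fF j)) n).
  apply: H => //.
  - move=> k Hk; rewrite /ex_L.
    case: (eqVneq k 2) => [->|k2]; first by rewrite /fF /bt /=; have -> : (m.-2).+1 = m.-1 by lia.
    by have -> : (minn k.-1 4 != 1) = true by lia.
  - exact: chkF_real.
  - exact: certL.
rewrite /goal_fin.
have -> : drun (fun j => p01 (fF j)) n = drun (fun k => (C m.-2 k, C (m.-2).+1 k)) n by [].
by rewrite -/(J m.-2) J_all //; lia.
Qed.

Lemma finR : C m.-1 n.-1 = false.
Proof.
apply/negbTE/negP => H2.
have := @machine_sound' 2 chk_fin p01 p00 ex_true en_R goal_fin
  (fun _ _ _ _ _ _ _ => erefl) (fun _ _ _ _ _ _ _ => erefl) fF n Hn (fun _ => erefl).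
have /andP [B1 B2] := fF_bnd.
move=> /(_ B1 B2) H.
have : goal_fin (drun (fun j => p01 (fF j)) n) (drun (fun j => p00 (fF j)) n).
  apply: H => //.
  - exact: chkF_real.
  - by rewrite /en_R /fF /bt /=; have -> : (m.-2).+1 = m.-1 by lia.
  - exact: certR.
rewrite /goal_fin.
have -> : drun (fun j => p01 (fF j)) n = drun (fun k => (C m.-2 k, C (m.-2).+1 k)) n by [].
by rewrite -/(J m.-2) J_all //; lia.
Qed.
End Main.

Unset Implicit Arguments.

Theorem mainTheorem11 (m n : nat) (C : config) :
  2 < m -> 2 < n -> ES m n C ->
  C (m - 1) 2 = false /\ C (m - 1) (n - 1) = false.
Proof.
move=> Hm Hn HES; rewrite !subn1; split.
  exact: (finL Hm Hn HES).
exact: (finR Hm Hn HES).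
Qed.
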